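(* Assume $\delta=0$ (only direct learning). For all sufficiently large $n$ there exists a symmetric investment equilibrium, and along any sequence of symmetric investment equilibria $(p^*,q^* )$, $$\lim_{n\to\infty}\iota(q^*,q^* )\,n^{1/k}=(k-1)^{1/k}.$$
   Context: Model (for each number of firms $n\ge 2$). There are $n$ firms $1,\dots,n$; firm $i$ can discover a single idea, also labelled $i$. Fixed parameters (independent of $n$): an integer complexity $k\ge 2$, an indirect-learning probability $\delta\in[0,1]$, and a cost function $c:[0,1)\to[0,\infty)$ that is continuously differentiable, increasing and convex with $c(0)=0$ and $c(p)\to\infty$ as $p\to1^-$. Each firm $i$ chooses $(p_i,q_i)\in[0,1)\times[0,1]$. Idea $i$ is discovered independently with probability $p_i$; $I$ is the random set of discovered ideas. The interaction rate is $\iota(q_i,q_j)=q_iq_j$. For each ordered pair $i\neq j$, independently, $i$ learns directly from $j$ with probability $\iota(q_i,q_j)$, and conditional on this, independently with probability $\delta$, $i$ also learns indirectly through $j$. The indirect-learning network has an edge $j\to i$ whenever $i$ learns indirectly through $j$. $I_i(\mathbf p,\mathbf q)=\{j\in I\setminus\{i\}:$ some firm $m$, with $m=i$ or with a directed path from $m$ to $i$ in the indirect-learning network, learns directly from $j\}$ (when $\delta=0$ this is just the set of discovered ideas $j$ such that $i$ learns directly from $j$). A technology is a $k$-element subset $t\subseteq I$; firm $j$ knows $t$ if $t\subseteq\{j\}\cup I_j$. $PT_i$ is the set of technologies $t$ with $i\in t$ known by $i$ and by no other firm. Payoff $U_i=\mathbb E|PT_i|-c(p_i)$. An equilibrium is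 a pure-strategy Nash equilibrium; symmetric if all firms choose the same action; investment if all $p_i>0$. Sequences are indexed by $n\to\infty$. *)

(* Defs.v *)
From HB Require Import structures.
From mathcomp Require Import all_boot.
From Stdlib Require Import Reals.

Set Implicit Arguments.
Unset Strict Implicit.
Unset Printing Implicit Defensive.

Local Open Scope R_scope.

Lemma Rplus_assoc' : associative Rplus.
Proof. by move=> x y z; rewrite Rplus_assoc. Qed.
Lemma Rmult_assoc' : associative Rmult.
Proof. by move=> x y z; rewrite Rmult_assoc. Qed.
HB.instance Definition _ :=
  Monoid.isComLaw.Build R R0 Rplus Rplus_assoc' Rplus_comm Rplus_0_l.
HB.instance Definition _ :=
  Monoid.isComLaw.Build R R1 Rmult Rmult_assoc' Rmult_comm Rmult_1_l.

(* An elementary outcome: which ideas are discovered (d i), and for each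
   ordered pair (i,j) whether firm i learns directly from firm j (L (i,j)). *)
Definition outcome (n : nat) : finType :=
  ({ffun 'I_n -> bool} * {ffun ('I_n * 'I_n) -> bool})%type.

Definition bern (a : R) (b : bool) : R := if b then a else 1 - a.

(* The diagonal
   bits L (i,i) carry no meaning and are set to false almost surely. *)
Definition outcome_prob (n : nat) (p q : 'I_n -> R) (w : outcome n) : R :=
  \big[Rmult/R1]_(i : 'I_n) bern (p i) (w.1 i) *
  \big[Rmult/R1]_(e : ('I_n * 'I_n)%type)
     (if e.1 == e.2 then bern 0 (w.2 e) else bern (q e.1 * q e.2) (w.2 e)).

Definition discovered (n : nat) (w : outcome n) : {set 'I_n} :=
  [set j | w.1 j].

Definition learned (n : nat) (w : outcome n) (i : 'I_n) : {set 'I_n} :=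
  [set j | (j \in discovered w) && (j != i) && w.2 (i, j)].

Definition technology (n k : nat) (w : outcome n) (t : {set 'I_n}) : bool :=
  (#|t| == k)%N && (t \subset discovered w).

Definition knows (n : nat) (w : outcome n) (j : 'I_n) (t : {set 'I_n}) : bool :=
  t \subset (j |: learned w j).

Definition PT (n k : nat) (w : outcome n) (i : 'I_n) : {set {set 'I_n}} :=
  [set t | [&& technology k w t, i \in t, knows w i t &
             [forall j, (j != i) ==> ~~ knows w j t]]].

Definition expected_PT (n k : nat) (p q : 'I_n -> R) (i : 'I_n) : R :=
  \big[Rplus/R0]_(w : outcome n) (outcome_prob p q w * INR #|PT k w i|).

Definition payoff (n k : nat) (c : R -> R) (p q : 'I_n -> R) (i : 'I_n) : R :=
  expected_PT k p q i - c (p i).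

Definition upd (n : nat) (f : 'I_n -> R) (i : 'I_n) (a : R) : 'I_n -> R :=
  fun j => if j == i then a else f j.

Definition admissible (a b : R) : Prop := 0 <= a < 1 /\ 0 <= b <= 1.

Definition equilibrium (n k : nat) (c : R -> R) (p q : 'I_n -> R) : Prop :=
  (forall i, admissible (p i) (q i)) /\
  forall i (a b : R), admissible a b ->
    payoff k c (upd p i a) (upd q i b) i <= payoff k c p q i.

Definition sym_invest_eq (n k : nat) (c : R -> R) (ps qs : R) : Prop :=
  equilibrium k c (fun _ : 'I_n => ps) (fun _ : 'I_n => qs) /\ 0 < ps.

Definition iota_rate (a b : R) : R := a * b.

Definition cost_ok (c : R -> R) : Prop :=
  c 0 = 0 /\ (forall x, 0 <= x < 1 -> 0 <= c x) /\
  (forall x y, 0 <= x -> x < y -> y < 1 -> c x < c y) /\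
  (forall x y t, 0 <= x < 1 -> 0 <= y < 1 -> 0 <= t <= 1 ->
     c (t * x + (1 - t) * y) <= t * c x + (1 - t) * c y) /\
  (exists c' : R -> R,
     (forall x, 0 < x < 1 -> derivable_pt_lim c x (c' x)) /\
     limit1_in (fun h => (c h - c 0) / h) (fun h => 0 < h < 1) (c' 0) 0 /\
     (forall x, 0 <= x < 1 -> limit1_in c' (fun y => 0 <= y < 1) (c' x) x)) /\
  (forall M, exists eps, 0 < eps /\ forall x, 1 - eps < x < 1 -> M < c x).

(* Main.v *)
From Stdlib Require Import Reals Lra Lia.
From Coquelicot Require Import Coquelicot.
Local Open Scope R_scope.

Definition Gf (K M : nat) (qs b : R) : R :=
  (b * qs) ^ (S K) * (1 - qs * b * (qs * qs) ^ K) ^ (S K) *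
  (1 - qs * b * (qs * qs) ^ (S K)) ^ (S M).

Definition phi (K M : nat) (al be x : R) : R :=
  INR (S K) * (1 - al * x) * (1 - be * x) - INR (S K) * (al * x) * (1 - be * x)
  - INR (S M) * (be * x) * (1 - al * x).

Definition Gd (K M : nat) (qs b : R) : R :=
  let al := (qs * qs) ^ K in let be := (qs * qs) ^ (S K) in
  qs * (b * qs) ^ K * (1 - al * (b * qs)) ^ K * (1 - be * (b * qs)) ^ M *
  phi K M al be (b * qs).

Lemma Gf_deriv K M qs b : derivable_pt_lim (Gf K M qs) b (Gd K M qs b).
Proof.
apply is_derive_Reals.
unfold Gf, Gd, phi.
auto_derive; [auto|].
change (match K with 0%nat => 1 | S _ => INR K + 1 end) with (INR (S K)).
change (match M with 0%nat => 1 | S _ => INR M + 1 end) with (INR (S M)).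
set (al := (qs * qs) ^ K).
replace ((qs * qs) ^ S K) with ((qs*qs) * al) by (unfold al; simpl; ring).
replace (1 + - (qs * b * al)) with (1 - al * (b * qs)) by ring.
replace (1 + - (qs * b * (qs * qs * al))) with (1 - qs * qs * al * (b * qs)) by ring.
set (A := 1 - al * (b * qs)).
set (B := 1 - qs * qs * al * (b * qs)).
set (X := b * qs).
unfold A, B, X.
ring.
Qed.

Definition Fo (K M : nat) (r : R) : R :=
  INR (S K) * (1 - r ^ (S K)) * (1 - r ^ (S (S K)))
  - INR (S K) * r ^ (S K) * (1 - r ^ (S (S K)))
  - INR (S M) * r ^ (S (S K)) * (1 - r ^ (S K)).

Lemma pow_cont m x : continuity_pt (fun y => y ^ m) x.
Proof. apply derivable_continuous_pt, derivable_pt_pow. Qed.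

Lemma Rpower_cont y x : 0 < x -> continuity_pt (fun z => Rpower z y) x.
Proof.
intro Hx. unfold Rpower.
apply (continuity_pt_comp (fun z => y * ln z) exp).
- apply continuity_pt_mult. apply continuity_pt_const; intros a b; reflexivity.
  apply derivable_continuous_pt. exists (/ x). now apply derivable_pt_lim_ln.
- apply derivable_continuous_pt, derivable_pt_exp.
Qed.

Lemma r_to_0 K (r : nat -> R) N0 :
  (forall n, (N0 <= n)%nat -> 0 < r n < 1 /\
     INR (S (n - (K + 3))) * r n ^ (S (S K)) <= INR (S K)) ->
  is_lim_seq r 0.
Proof.
intros H. apply is_lim_seq_Reals. intros eps Heps.
set (e := Rmin eps 1).
assert (He : 0 < e) by (unfold e; apply Rmin_pos; lra).
assert (He1 : e <= 1) by (unfold e; apply Rmin_r).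
assert (Hee : e <= eps) by (unfold e; apply Rmin_l).
assert (Hp : 0 < e ^ (S (S K))) by (apply pow_lt; lra).
destruct (INR_archimed (e ^ (S (S K))) (INR (S K)) Hp) as [n1 Hn1].
exists (N0 + n1 + K + 3)%nat. intros n Hn.
destruct (H n ltac:(lia)) as [[H0 H1] H2].
unfold R_dist. rewrite Rminus_0_r, Rabs_pos_eq by lra.
apply Rlt_le_trans with e; [|exact Hee].
destruct (Rlt_or_le (r n) e) as [Hl|Hl]; [exact Hl|exfalso].
assert (Hv : e ^ (S (S K)) <= r n ^ (S (S K))) by (apply pow_incr; lra).
assert (Hm : INR n1 <= INR (S (n - (K + 3)))) by (apply le_INR; lia).
assert (INR n1 * e ^ (S (S K)) <= INR (S (n - (K + 3))) * r n ^ (S (S K))).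
{ apply Rmult_le_compat; try lra. apply pos_INR. }
lra.
Qed.

Lemma lim_part K (r : nat -> R) N0 :
  (K + 3 <= N0)%nat ->
  (forall n, (N0 <= n)%nat -> 0 < r n < 1 /\ Fo K (n - (K + 3)) (r n) = 0) ->
  Un_cv (fun n => r n * Rpower (INR n) (1 / INR (S (S K))))
        (Rpower (INR (S (S K)) - 1) (1 / INR (S (S K)))).
Proof.
intros HN0 H.
set (k := S (S K)).
assert (Hb : forall n, (N0 <= n)%nat ->
   0 < r n < 1 /\ 0 < r n ^ (S K) < 1 /\ 0 < r n ^ k < 1 /\
   INR (S (n - (K + 3))) * r n ^ k * (1 - r n ^ (S K)) =
     INR (S K) * (1 - 2 * r n ^ (S K)) * (1 - r n ^ k)).
{ intros n Hn. destruct (H n Hn) as [[H0 H1] HF].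
  assert (Hu : 0 < r n ^ (S K) < 1).
  { split. apply pow_lt; lra. apply pow_lt_1_compat; [lra|lia]. }
  assert (Hv : 0 < r n ^ k < 1).
  { split. apply pow_lt; lra. apply pow_lt_1_compat; [lra|unfold k; lia]. }
  repeat split; try lra. unfold Fo in HF. fold k in HF. lra. }
assert (Hr0 : is_lim_seq r 0).
{ apply (r_to_0 K r N0). intros n Hn. destruct (Hb n Hn) as (H1 & H2 & H3 & H4).
  split; [exact H1|].
  assert (INR (S (n - (K + 3))) * r n ^ k * (1 - r n ^ S K) <= INR (S K) * (1 - r n ^ S K)).
  { rewrite H4. assert (0 <= INR (S K)) by apply pos_INR.
    rewrite Rmult_assoc. apply Rmult_le_compat_l; [lra|]. fold k in H3. nra. }
  assert (0 < 1 - r n ^ S K) by lra.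
  fold k. apply Rmult_le_reg_r with (1 - r n ^ S K); lra. }
assert (Hu0 : is_lim_seq (fun n => r n ^ (S K)) 0).
{ replace 0 with (0 ^ (S K)) by (simpl; ring).
  apply (is_lim_seq_continuous (fun y => y ^ S K) r 0); [apply pow_cont|exact Hr0]. }
assert (Hv0 : is_lim_seq (fun n => r n ^ k) 0).
{ replace 0 with (0 ^ k) by (unfold k; simpl; ring).
  apply (is_lim_seq_continuous (fun y => y ^ k) r 0); [apply pow_cont|exact Hr0]. }
set (W := fun n => INR (S K) * (1 - 2 * r n ^ (S K)) * (1 - r n ^ k) / (1 - r n ^ (S K))
                   + INR k * r n ^ k).
assert (HW : is_lim_seq W (INR (S K))).
{ replace (INR (S K)) with (INR (S K) * (1 - 2 * 0) * (1 - 0) / (1 - 0) + INR k * 0)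
    by (field).
  unfold W. apply is_lim_seq_plus'.
  - apply is_lim_seq_div'; [|apply is_lim_seq_minus'; [apply is_lim_seq_const|exact Hu0]|lra].
    apply is_lim_seq_mult'.
    + apply is_lim_seq_mult'; [apply is_lim_seq_const|].
      apply is_lim_seq_minus'; [apply is_lim_seq_const|].
      apply is_lim_seq_mult'; [apply is_lim_seq_const|exact Hu0].
    + apply is_lim_seq_minus'; [apply is_lim_seq_const|exact Hv0].
  - apply is_lim_seq_mult'; [apply is_lim_seq_const|exact Hv0]. }
assert (HKpos : 0 < INR (S K)) by (apply lt_0_INR; lia).
apply is_lim_seq_Reals.
replace (INR k - 1) with (INR (S K)) by (unfold k; rewrite (S_INR (S K)); ring).
apply is_lim_seq_ext_loc with (u := fun n => Rpower (W n) (1 / INR k)).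
- exists N0. intros n Hn. destruct (Hb n Hn) as (H1 & H2 & H3 & H4).
  assert (Hn0 : 0 < INR n) by (apply lt_0_INR; lia).
  assert (EW : W n = INR n * r n ^ k).
  { unfold W.
    assert (En : INR n = INR (S (n - (K + 3))) + INR k).
    { rewrite <- plus_INR. f_equal. unfold k. lia. }
    rewrite En. rewrite Rmult_plus_distr_r. rewrite <- H4. field. lra. }
  rewrite EW, <- Rpower_mult_distr by lra.
  rewrite <- (Rpower_pow k (r n)) by lra.
  rewrite Rpower_mult. replace (INR k * (1 / INR k)) with 1.
  + rewrite Rpower_1 by lra. ring.
  + field. apply not_0_INR. unfold k; lia.
- apply (is_lim_seq_continuous (fun z => Rpower z (1 / INR k)) W); [apply Rpower_cont; exact HKpos|exact HW].
Qed.

Lemma max_deriv0 f x l a b :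
  a < x < b -> derivable_pt_lim f x l -> (forall y, a < y < b -> f y <= f x) -> l = 0.
Proof.
intros [H1 H2] Hd Hm.
pose (pr := exist (fun l0 => derivable_pt_abs f x l0) l Hd : derivable_pt f x).
change l with (derive_pt f x pr).
apply (deriv_maximum f a b x pr H1 H2). intros y Ha Hb. apply Hm; lra.
Qed.

Lemma phi_r K M r : phi K M (r ^ K) (r ^ S K) r = Fo K M r.
Proof. unfold phi, Fo. simpl. ring. Qed.

Lemma Gd_qs K M qs :
  Gd K M qs qs = qs * (qs * qs) ^ K * (1 - (qs * qs) ^ S K) ^ K *
                 (1 - (qs * qs) ^ S (S K)) ^ M * Fo K M (qs * qs).
Proof.
unfold Gd; cbv zeta. rewrite <- phi_r.
replace (1 - (qs * qs) ^ K * (qs * qs)) with (1 - (qs * qs) ^ S K) by (simpl; ring).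
replace (1 - (qs * qs) ^ S K * (qs * qs)) with (1 - (qs * qs) ^ S (S K)) by (simpl; ring).
ring.
Qed.

Lemma pow_lt1 x m : 0 <= x < 1 -> x ^ S m < 1.
Proof.
intros H. destruct (Req_dec x 0) as [->|Hx].
- simpl. lra.
- apply pow_lt_1_compat; [lra|lia].
Qed.

Lemma foc_from_max K M qs :
  0 < qs < 1 -> (forall b, 0 <= b <= 1 -> Gf K M qs b <= Gf K M qs qs) ->
  Fo K M (qs * qs) = 0.
Proof.
intros Hq Hm.
assert (H0 : Gd K M qs qs = 0).
{ apply (max_deriv0 (Gf K M qs) qs _ 0 1); [lra|apply Gf_deriv|].
  intros y Hy. apply Hm. lra. }
rewrite Gd_qs in H0.
assert (Hr : 0 < qs * qs < 1) by nra.
assert (H1 : qs * qs ^ 1 < 1) by (simpl; nra).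
assert (Hu : (qs * qs) ^ S K < 1) by (apply pow_lt1; lra).
assert (Hv : (qs * qs) ^ S (S K) < 1) by (apply pow_lt1; lra).
assert (P : 0 < qs * (qs * qs) ^ K * (1 - (qs * qs) ^ S K) ^ K *
                 (1 - (qs * qs) ^ S (S K)) ^ M).
{ repeat apply Rmult_lt_0_compat; try lra; apply pow_lt; lra. }
destruct (Rmult_integral _ _ H0) as [E|E]; [lra|exact E].
Qed.

Lemma phi_alt K M al be x :
  phi K M al be x = INR (S K) * ((1 - be * x) * (1 - 2 * al * x)) - INR (S M) * (be * x * (1 - al * x)).
Proof. unfold phi. ring. Qed.

Lemma phi_mono K M al be x y :
  0 <= al <= 1 -> 0 <= be <= 1 -> 0 <= x <= y -> y <= 1/4 -> phi K M al be y <= phi K M al be x.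
Proof.
intros Ha Hb Hxy Hy. rewrite !phi_alt.
assert (HK : 0 <= INR (S K)) by apply pos_INR.
assert (HM : 0 <= INR (S M)) by apply pos_INR.
assert (A : (1 - be * y) * (1 - 2 * al * y) <= (1 - be * x) * (1 - 2 * al * x)).
{ apply Rmult_le_compat; nra. }
assert (B : be * x * (1 - al * x) <= be * y * (1 - al * y)).
{ assert (E : be * y * (1 - al * y) - be * x * (1 - al * x) = be * ((y - x) * (1 - al * (x + y)))) by ring.
  assert (0 <= (y - x) * (1 - al * (x + y))) by (apply Rmult_le_pos; nra).
  assert (0 <= be * ((y - x) * (1 - al * (x + y)))) by (apply Rmult_le_pos; lra).
  lra. }
assert (INR (S K) * ((1 - be * y) * (1 - 2 * al * y)) <= INR (S K) * ((1 - be * x) * (1 - 2 * al * x)))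
  by (apply Rmult_le_compat_l; lra).
assert (INR (S M) * (be * x * (1 - al * x)) <= INR (S M) * (be * y * (1 - al * y)))
  by (apply Rmult_le_compat_l; lra).
lra.
Qed.

Lemma pow_01 x m : 0 <= x <= 1 -> 0 <= x ^ m <= 1.
Proof. intros H. split. apply pow_le; lra. rewrite <- (pow1 m). apply pow_incr; lra. Qed.

Lemma Gd_sign K M qs c :
  0 < qs <= 1/4 -> Fo K M (qs * qs) = 0 -> 0 <= c <= 1 ->
  (c <= qs -> 0 <= Gd K M qs c) /\ (qs <= c -> Gd K M qs c <= 0).
Proof.
intros Hq HF Hc.
set (r := qs * qs) in *.
assert (Hr : 0 < r <= qs / 4) by (unfold r; nra).
assert (Hal : 0 <= r ^ K <= 1) by (apply pow_01; lra).
assert (Hbe : 0 <= r ^ S K <= 1) by (apply pow_01; lra).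
assert (HX : 0 <= c * qs <= qs) by nra.
assert (Hpref : 0 <= qs * (c * qs) ^ K * (1 - r ^ K * (c * qs)) ^ K * (1 - r ^ S K * (c * qs)) ^ M).
{ repeat apply Rmult_le_pos; try lra; apply pow_le; nra. }
assert (Hphr : phi K M (r ^ K) (r ^ S K) r = 0) by (rewrite phi_r; exact HF).
unfold Gd; cbv zeta. fold r.
split; intros Hcq.
- assert (phi K M (r ^ K) (r ^ S K) r <= phi K M (r ^ K) (r ^ S K) (c * qs)).
  { apply phi_mono; try lra. unfold r; nra. }
  apply Rmult_le_pos; lra.
- assert (phi K M (r ^ K) (r ^ S K) (c * qs) <= phi K M (r ^ K) (r ^ S K) r).
  { apply phi_mono; try lra. unfold r; nra. }
  rewrite <- (Rmult_0_r (qs * (c * qs) ^ K * (1 - r ^ K * (c * qs)) ^ K * (1 - r ^ S K * (c * qs)) ^ M)).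
  apply Rmult_le_compat_l; lra.
Qed.

Lemma Gf_global K M qs :
  0 < qs <= 1/4 -> Fo K M (qs * qs) = 0 ->
  forall b, 0 <= b <= 1 -> Gf K M qs b <= Gf K M qs qs.
Proof.
intros Hq HF b Hb.
destruct (Rtotal_order b qs) as [Hl|[He|Hg]].
- destruct (MVT_cor2 (Gf K M qs) (Gd K M qs) b qs Hl) as [c [Hc1 Hc2]].
  { intros c _; apply Gf_deriv. }
  destruct (Gd_sign K M qs c Hq HF ltac:(lra)) as [S1 _].
  assert (0 <= Gd K M qs c * (qs - b)) by (apply Rmult_le_pos; [apply S1|]; lra).
  lra.
- subst; lra.
- destruct (MVT_cor2 (Gf K M qs) (Gd K M qs) qs b Hg) as [c [Hc1 Hc2]].
  { intros c _; apply Gf_deriv. }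
  destruct (Gd_sign K M qs c Hq HF ltac:(lra)) as [_ S2].
  assert (Gd K M qs c * (b - qs) <= 0).
  { rewrite <- (Rmult_0_l (b - qs)). apply Rmult_le_compat_r; [lra|apply S2; lra]. }
  lra.
Qed.

Lemma exp_le x y : x <= y -> exp x <= exp y.
Proof. intros [H|H]. left; now apply exp_increasing. subst; lra. Qed.

Lemma Fo_cont K M : continuity (Fo K M).
Proof. unfold Fo. reg. Qed.

Lemma pow_le_self x m : 0 <= x <= 1 -> x ^ S m <= x.
Proof.
intros H. simpl. assert (0 <= x ^ m <= 1) by (apply pow_01; lra).
assert (x * x ^ m <= x * 1) by (apply Rmult_le_compat_l; lra). lra.
Qed.

Lemma root_exists K rho :
  0 < rho <= 1/16 ->
  exists M0, forall M, (M0 <= M)%nat -> exists r, 0 < r < rho /\ Fo K M r = 0.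
Proof.
intros Hrho.
assert (Hp : 0 < rho ^ S (S K) / 2) by (apply Rdiv_lt_0_compat; [apply pow_lt|]; lra).
destruct (INR_archimed _ (INR (S K)) Hp) as [M0 HM0].
exists M0. intros M HM.
assert (HMM : INR M0 <= INR (S M)) by (apply le_INR; lia).
assert (Hu : 0 < rho ^ S K <= rho) by (split; [apply pow_lt; lra|apply pow_le_self; lra]).
assert (Hv : 0 < rho ^ S (S K) <= rho) by (split; [apply pow_lt; lra|apply pow_le_self; lra]).
assert (HK : 0 <= INR (S K)) by apply pos_INR.
assert (Fneg : Fo K M rho < 0).
{ unfold Fo.
  assert (A1 : INR (S K) * (1 - rho ^ S K) * (1 - rho ^ S (S K))
              - INR (S K) * rho ^ S K * (1 - rho ^ S (S K)) <= INR (S K)).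
  { assert (E : INR (S K) * (1 - rho ^ S K) * (1 - rho ^ S (S K))
              - INR (S K) * rho ^ S K * (1 - rho ^ S (S K))
              = INR (S K) * ((1 - 2 * rho ^ S K) * (1 - rho ^ S (S K)))) by ring.
    rewrite E.
    assert (INR (S K) * ((1 - 2 * rho ^ S K) * (1 - rho ^ S (S K))) <= INR (S K) * 1)
      by (apply Rmult_le_compat_l; [lra|nra]). lra. }
  assert (A2 : INR M0 * (rho ^ S (S K) / 2) <= INR (S M) * rho ^ S (S K) * (1 - rho ^ S K)).
  { rewrite Rmult_assoc. apply Rmult_le_compat; try lra. apply pos_INR.
    assert (1 - rho ^ S K >= 1/2) by lra.
    assert (rho ^ S (S K) * (1/2) <= rho ^ S (S K) * (1 - rho ^ S K)) by (apply Rmult_le_compat_l; lra).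
    lra. }
  lra. }
destruct (IVT (fun r => - Fo K M r) 0 rho) as [z [Hz1 Hz2]].
- intros x. apply continuity_pt_opp. apply Fo_cont.
- lra.
- unfold Fo. rewrite (pow_i (S K)), (pow_i (S (S K))) by lia. assert (0 < INR (S K)) by (apply lt_0_INR; lia). lra.
- lra.
- exists z. assert (Fo K M z = 0) by lra.
  split; [|assumption]. split.
  + destruct (Req_dec z 0) as [E|E]; [|lra]. subst. unfold Fo in H. rewrite (pow_i (S K)), (pow_i (S (S K))) in H by lia.
    assert (0 < INR (S K)) by (apply lt_0_INR; lia). lra.
  + destruct (Req_dec z rho) as [E|E]; [|lra]. subst. lra.
Qed.

Lemma one_minus_exp v : 0 <= v < 1 -> exp (- (v / (1 - v))) <= 1 - v.
Proof.
intros Hv. set (x := v / (1 - v)).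
assert (Hx : 0 <= x) by (unfold x; apply Rdiv_le_0_compat; lra).
assert (H1 : 1 + x <= exp x).
{ destruct (Req_dec x 0) as [E|E]. rewrite E, exp_0; lra. left; now apply exp_ineq1. }
rewrite exp_Ropp.
assert (E : 1 - v = / (1 + x)) by (unfold x; field; lra).
rewrite E. apply Rinv_le_contravar; lra.
Qed.

Lemma pow_exp_bound v n : 0 <= v < 1 -> exp (- (INR n * (v / (1 - v)))) <= (1 - v) ^ n.
Proof.
intros Hv. induction n as [|n IH].
- simpl. rewrite Rmult_0_l, Ropp_0, exp_0. lra.
- rewrite S_INR. replace (- ((INR n + 1) * (v / (1 - v)))) with
    (- (INR n * (v / (1 - v))) + - (v / (1 - v))) by ring.
  rewrite exp_plus. simpl. rewrite Rmult_comm.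
  apply Rmult_le_compat; try (left; apply exp_pos); auto. now apply one_minus_exp.
Qed.

Lemma Gf_lower K M r :
  0 < r <= 1/16 -> Fo K M r = 0 ->
  / (2 * r) * (/ 2) ^ S K * exp (- INR (S K)) <= INR (S M) * Gf K M (sqrt r) (sqrt r).
Proof.
intros Hr HF.
assert (Es : sqrt r * sqrt r = r) by (apply sqrt_sqrt; lra).
unfold Gf. rewrite Es.
replace (r * (r ^ K)) with (r ^ S K) by (simpl; ring).
replace (r * r ^ S K) with (r ^ S (S K)) by (simpl; ring).
set (u := r ^ S K) in *. set (v := r ^ S (S K)) in *.
assert (Hu : 0 < u <= r) by (split; [apply pow_lt|apply pow_le_self]; lra).
assert (Hv : 0 < v <= r) by (split; [apply pow_lt|apply pow_le_self]; lra).
assert (Evu : v = r * u) by (unfold v, u; simpl; ring).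
assert (HK : 1 <= INR (S K)) by (rewrite S_INR; assert (0 <= INR K) by apply pos_INR; lra).
assert (HM : 0 <= INR (S M)) by apply pos_INR.
assert (FOC : INR (S M) * v * (1 - u) = INR (S K) * (1 - 2 * u) * (1 - v)).
{ unfold Fo in HF. fold u v in HF. lra. }
assert (Ha : / (2 * r) <= INR (S M) * u).
{ assert (INR (S M) * v >= 1/2).
  { assert (INR (S K) * (1 - 2 * u) * (1 - v) >= 1/2).
    { assert ((1 - 2 * u) * (1 - v) >= 1/2) by nra.
      assert (INR (S K) * ((1 - 2 * u) * (1 - v)) >= 1 * ((1 - 2 * u) * (1 - v))).
      { apply Rmult_ge_compat_r; lra. }
      lra. }
    assert (INR (S M) * v * (1 - u) <= INR (S M) * v).
    { assert (0 <= INR (S M) * v) by (apply Rmult_le_pos; lra). nra. }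
    lra. }
  rewrite Evu in H.
  apply Rmult_le_reg_l with (2 * r); [lra|].
  rewrite Rinv_r by lra. nra. }
assert (Hb : (/ 2) ^ S K <= (1 - u) ^ S K) by (apply pow_incr; lra).
assert (Hc : exp (- INR (S K)) <= (1 - v) ^ S M).
{ apply Rle_trans with (exp (- (INR (S M) * (v / (1 - v))))).
  - apply exp_le. apply Ropp_le_contravar.
    assert (INR (S M) * v <= INR (S K) * (1 - v)).
    { assert (INR (S M) * v * (1 - u) <= INR (S K) * (1 - v) * (1 - u)).
      { rewrite FOC. assert (0 <= INR (S K) * (1 - v)) by (apply Rmult_le_pos; lra).
        replace (INR (S K) * (1 - 2 * u) * (1 - v)) with (INR (S K) * (1 - v) * (1 - 2 * u)) by ring.
        apply Rmult_le_compat_l; lra. }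
      apply Rmult_le_reg_r with (1 - u); lra. }
    replace (INR (S M) * (v / (1 - v))) with (INR (S M) * v / (1 - v)) by (field; lra).
    apply Rmult_le_reg_r with (1 - v); [lra|].
    unfold Rdiv. rewrite Rmult_assoc, Rinv_l by lra. lra.
  - apply pow_exp_bound; lra. }
assert (P1 : 0 <= / (2 * r)) by (left; apply Rinv_0_lt_compat; lra).
assert (P2 : 0 <= (/ 2) ^ S K) by (apply pow_le; lra).
assert (P3 : 0 <= exp (- INR (S K))) by (left; apply exp_pos).
replace (INR (S M) * (u * (1 - u) ^ S K * (1 - v) ^ S M))
  with (INR (S M) * u * (1 - u) ^ S K * (1 - v) ^ S M) by ring.
apply Rmult_le_compat; try lra.
- apply Rmult_le_pos; lra.
- apply Rmult_le_compat; lra.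
Qed.

Lemma convex_tangent (c : R -> R) d x a :
  (forall x y t, 0 <= x < 1 -> 0 <= y < 1 -> 0 <= t <= 1 ->
     c (t * x + (1 - t) * y) <= t * c x + (1 - t) * c y) ->
  0 < x < 1 -> 0 <= a < 1 -> derivable_pt_lim c x d -> c x + d * (a - x) <= c a.
Proof.
intros Hconv Hx Ha Hd.
destruct (Rle_or_lt (c x + d * (a - x)) (c a)) as [H|H]; [exact H|exfalso].
set (g := c x + d * (a - x) - c a).
assert (Hg : 0 < g) by (unfold g; lra).
assert (Hax : a <> x) by (intro E; subst; unfold g in Hg; lra).
set (D := Rabs (a - x)).
assert (HD : 0 < D) by (unfold D; apply Rabs_pos_lt; lra).
assert (Heps : 0 < g / (2 * D)) by (apply Rdiv_lt_0_compat; lra).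
destruct (Hd _ Heps) as [delta Hdel].
set (t := Rmin (1/2) (delta / (2 * D))).
assert (Ht0 : 0 < t).
{ unfold t. apply Rmin_pos; [lra|]. apply Rdiv_lt_0_compat; [apply cond_pos|lra]. }
assert (Ht1 : t <= 1/2) by (unfold t; apply Rmin_l).
assert (Ht2 : t <= delta / (2 * D)) by (unfold t; apply Rmin_r).
set (h := t * (a - x)).
assert (Hh0 : h <> 0).
{ unfold h. intro E. apply Rmult_integral in E. destruct E; lra. }
assert (Hhabs : Rabs h < delta).
{ unfold h. rewrite Rabs_mult, (Rabs_pos_eq t) by lra. fold D.
  assert (t * D <= delta / (2 * D) * D) by (apply Rmult_le_compat_r; lra).
  assert (delta / (2 * D) * D = delta / 2) by (field; lra).
  assert (0 < delta) by apply cond_pos. lra. }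
specialize (Hdel h Hh0 Hhabs).
set (Q := (c (x + h) - c x) / h) in *.
assert (Hconv' : c (x + h) <= t * c a + (1 - t) * c x).
{ replace (x + h) with (t * a + (1 - t) * x) by (unfold h; ring).
  apply Hconv; lra. }
assert (EQ : c (x + h) - c x = Q * h) by (unfold Q; field; exact Hh0).
assert (H1 : Q * (a - x) <= c a - c x).
{ assert (Q * h <= t * (c a - c x)) by lra.
  unfold h in H0.
  apply Rmult_le_reg_l with t; [lra|]. lra. }
assert (H2 : (d - Q) * (a - x) <= g / 2).
{ apply Rle_trans with (Rabs ((d - Q) * (a - x))); [apply Rle_abs|].
  rewrite Rabs_mult. fold D. rewrite Rabs_minus_sym.
  assert (Rabs (Q - d) * D <= g / (2 * D) * D) by (apply Rmult_le_compat_r; lra).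
  assert (g / (2 * D) * D = g / 2) by (field; lra).
  lra. }
unfold g in *. lra.
Qed.

Lemma poly_deriv L n x :
  derivable_pt_lim (fun p => L * p ^ S n / INR (S n)) x (L * x ^ n).
Proof.
apply is_derive_Reals. auto_derive; [auto|].
change (match n with 0%nat => 1 | S _ => INR n + 1 end) with (INR (S n)).
field. apply not_0_INR; lia.
Qed.

Lemma choose_ps (c c' : R -> R) K L :
  (forall x, 0 < x < 1 -> derivable_pt_lim c x (c' x)) ->
  (forall x, 0 <= x < 1 -> 0 <= c x) ->
  (forall M, exists eps, 0 < eps /\ forall x, 1 - eps < x < 1 -> M < c x) ->
  0 < L -> c (1/2) < L * (1/2) ^ S (S K) / INR (S (S K)) ->
  exists ps, 0 < ps < 1 /\ c' ps = L * ps ^ S K.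
Proof.
intros Hder Hnn Hinf HL Hhalf.
set (n := S (S K)).
assert (Hn : 0 < INR n) by (apply lt_0_INR; unfold n; lia).
set (Psi := fun p => L * p ^ S (S K) / INR (S (S K)) - c p).
assert (Hpsi : 0 < Psi (1/2)) by (unfold Psi; lra).
set (delta := Rmin (1/4) (Psi (1/2) * INR n / (2 * L))).
assert (Hd0 : 0 < delta).
{ unfold delta. apply Rmin_pos; [lra|]. apply Rdiv_lt_0_compat; [apply Rmult_lt_0_compat|]; lra. }
assert (Hd1 : delta <= 1/4) by (unfold delta; apply Rmin_l).
assert (Hd2 : delta <= Psi (1/2) * INR n / (2 * L)) by (unfold delta; apply Rmin_r).
assert (Psid : Psi delta < Psi (1/2)).
{ unfold Psi at 1. fold n.
  assert (delta ^ S (S K) <= delta) by (apply pow_le_self; lra).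
  assert (Hc : 0 <= c delta) by (apply Hnn; lra).
  assert (L * delta ^ S (S K) / INR n <= L * delta / INR n).
  { unfold Rdiv. apply Rmult_le_compat_r; [left; apply Rinv_0_lt_compat; lra|].
    apply Rmult_le_compat_l; lra. }
  assert (L * delta / INR n <= Psi (1/2) / 2).
  { apply Rle_trans with (L * (Psi (1/2) * INR n / (2 * L)) / INR n).
    { apply Rmult_le_compat_r; [left; apply Rinv_0_lt_compat; lra|].
      apply Rmult_le_compat_l; lra. }
    right. field. lra. }
  fold n in H0. lra. }
destruct (Hinf (L / INR n)) as [eps [Heps Hc1]].
set (e := Rmin eps (1/2)).
assert (He : 0 < e) by (unfold e; apply Rmin_pos; lra).
assert (He1 : e <= eps) by (unfold e; apply Rmin_l).
assert (He2 : e <= 1/2) by (unfold e; apply Rmin_r).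
set (b0 := 1 - e / 2).
assert (Hneg : forall x, 1 - e < x < 1 -> Psi x < 0).
{ intros x Hx. unfold Psi. fold n.
  assert (x ^ n <= 1) by (apply pow_01; lra).
  assert (L * x ^ n / INR n <= L * 1 / INR n).
  { apply Rmult_le_compat_r; [left; apply Rinv_0_lt_compat; lra|].
    apply Rmult_le_compat_l; lra. }
  replace (L * 1 / INR n) with (L / INR n) in H0 by (field; lra).
  assert (L / INR n < c x) by (apply Hc1; lra).
  lra. }
assert (Hcont : forall y, delta <= y <= b0 -> continuity_pt Psi y).
{ intros y Hy. apply derivable_continuous_pt.
  exists (L * y ^ S K - c' y).
  apply (derivable_pt_lim_minus (fun p => L * p ^ S (S K) / INR (S (S K))) c).
  apply poly_deriv. apply Hder. unfold b0 in Hy; lra. }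
destruct (continuity_ab_maj Psi delta b0 ltac:(unfold b0; lra) Hcont) as [Mx [HMx1 HMx2]].
assert (H12 : Psi (1/2) <= Psi Mx) by (apply HMx1; unfold b0; lra).
assert (HMl : delta < Mx).
{ destruct (Req_dec Mx delta) as [E|E]; [rewrite E in H12; lra|lra]. }
assert (HMr : Mx <= 1 - e).
{ destruct (Rle_or_lt Mx (1 - e)) as [h|h]; [exact h|].
  assert (Psi Mx < 0) by (apply Hneg; unfold b0 in HMx2; lra). lra. }
exists Mx. split; [unfold b0 in HMx2; lra|].
assert (Hdl : derivable_pt_lim Psi Mx (L * Mx ^ S K - c' Mx)).
{ apply (derivable_pt_lim_minus (fun p => L * p ^ S (S K) / INR (S (S K))) c).
  apply poly_deriv. apply Hder. unfold b0 in HMx2; lra. }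
assert (L * Mx ^ S K - c' Mx = 0).
{ apply (max_deriv0 Psi Mx _ delta b0); [unfold b0; lra|exact Hdl|].
  intros y Hy. apply HMx1. lra. }
lra.
Qed.

Lemma exist_pure K (c c' : R -> R) :
  (forall x, 0 < x < 1 -> derivable_pt_lim c x (c' x)) ->
  (forall x, 0 <= x < 1 -> 0 <= c x) ->
  (forall M, exists eps, 0 < eps /\ forall x, 1 - eps < x < 1 -> M < c x) ->
  (forall x y t, 0 <= x < 1 -> 0 <= y < 1 -> 0 <= t <= 1 ->
     c (t * x + (1 - t) * y) <= t * c x + (1 - t) * c y) ->
  exists M0, forall M, (M0 <= M)%nat -> forall Nr, INR (S M) <= Nr ->
   exists ps qs, 0 < ps < 1 /\ 0 <= qs <= 1 /\
   forall a b, 0 <= a < 1 -> 0 <= b <= 1 ->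
     Nr * (a * ps ^ S K * Gf K M qs b) - c a <= Nr * (ps * ps ^ S K * Gf K M qs qs) - c ps.
Proof.
intros Hder Hnn Hinf Hconv.
set (C1 := (/ 2) ^ S K * exp (- INR (S K))).
assert (HC1 : 0 < C1) by (unfold C1; apply Rmult_lt_0_compat; [apply pow_lt; lra|apply exp_pos]).
set (n := S (S K)).
assert (Hn : 0 < INR n) by (apply lt_0_INR; unfold n; lia).
assert (Hh : 0 < (1/2) ^ n) by (apply pow_lt; lra).
assert (Hc12 : 0 <= c (1/2)) by (apply Hnn; lra).
set (rho := Rmin (1/16) (C1 * (1/2) ^ n / (INR n * 2 * (c (1/2) + 1)))).
assert (Hrho0 : 0 < rho).
{ unfold rho. apply Rmin_pos; [lra|]. apply Rdiv_lt_0_compat.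
  apply Rmult_lt_0_compat; lra. apply Rmult_lt_0_compat; [apply Rmult_lt_0_compat|]; lra. }
assert (Hrho1 : rho <= 1/16) by (unfold rho; apply Rmin_l).
assert (Hrho2 : rho <= C1 * (1/2) ^ n / (INR n * 2 * (c (1/2) + 1))) by (unfold rho; apply Rmin_r).
destruct (root_exists K rho ltac:(lra)) as [M0 HM0].
exists M0. intros M HM Nr HNr.
destruct (HM0 M HM) as [r [Hr HF]].
set (qs := sqrt r).
assert (Hqs : qs * qs = r) by (apply sqrt_sqrt; lra).
assert (Hqs0 : 0 < qs) by (apply sqrt_lt_R0; lra).
assert (Hqs1 : qs <= 1/4) by nra.
assert (HF' : Fo K M (qs * qs) = 0) by (rewrite Hqs; exact HF).
assert (Hglob := Gf_global K M qs ltac:(lra) HF').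
assert (Hlow := Gf_lower K M r ltac:(lra) HF). fold qs in Hlow.
assert (HSM : 0 < INR (S M)) by (apply lt_0_INR; lia).
set (G := Gf K M qs qs) in *.
assert (Hlow2 : C1 / (2 * rho) < INR (S M) * G).
{ apply Rlt_le_trans with (/ (2 * r) * C1); [|unfold C1; rewrite <- Rmult_assoc; exact Hlow].
  unfold Rdiv. rewrite Rmult_comm. apply Rmult_lt_compat_r; [exact HC1|].
  apply Rinv_lt_contravar; [apply Rmult_lt_0_compat; lra|lra]. }
assert (HG : 0 < G).
{ assert (0 < INR (S M) * G).
  { apply Rlt_trans with (C1 / (2 * rho)); [|exact Hlow2].
    apply Rdiv_lt_0_compat; lra. }
  destruct (Rle_or_lt G 0) as [h|h]; [|exact h].
  assert (INR (S M) * G <= 0) by (rewrite <- (Rmult_0_r (INR (S M))); apply Rmult_le_compat_l; lra).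
  lra. }
set (L := Nr * G).
assert (HL : INR (S M) * G <= L) by (unfold L; apply Rmult_le_compat_r; lra).
assert (HL0 : 0 < L) by (assert (0 < INR (S M) * G) by (apply Rmult_lt_0_compat; lra); lra).
assert (Hhalf : c (1/2) < L * (1/2) ^ S (S K) / INR (S (S K))).
{ fold n.
  assert (E1 : C1 / (2 * rho) * (1/2) ^ n / INR n >= c (1/2) + 1).
  { assert (E2 : rho * (INR n * 2 * (c (1/2) + 1)) <= C1 * (1/2) ^ n).
    { apply Rmult_le_reg_r with (/ (INR n * 2 * (c (1/2) + 1))).
      apply Rinv_0_lt_compat; apply Rmult_lt_0_compat; [apply Rmult_lt_0_compat|]; lra.
      rewrite Rmult_assoc, Rinv_r by (apply Rgt_not_eq; apply Rmult_lt_0_compat; [apply Rmult_lt_0_compat|]; lra).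
      lra. }
    apply Rle_ge.
    apply Rmult_le_reg_r with (2 * rho * INR n); [apply Rmult_lt_0_compat; lra|].
    replace (C1 / (2 * rho) * (1 / 2) ^ n / INR n * (2 * rho * INR n)) with (C1 * (1/2) ^ n)
      by (field; lra).
    lra. }
  assert (E3 : C1 / (2 * rho) * (1/2) ^ n / INR n <= L * (1/2) ^ n / INR n).
  { apply Rmult_le_compat_r; [left; apply Rinv_0_lt_compat; lra|].
    apply Rmult_le_compat_r; lra. }
  lra. }
destruct (choose_ps c c' K L Hder Hnn Hinf HL0 Hhalf) as [ps [Hps Hd]].
exists ps, qs. split; [exact Hps|]. split; [lra|].
intros a b Ha Hb.
assert (Hpk : 0 <= ps ^ S K) by (apply pow_le; lra).
assert (HNr0 : 0 <= Nr) by lra.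
assert (Gb := Hglob b Hb).
assert (T1 : Nr * (a * ps ^ S K * Gf K M qs b) <= Nr * (a * ps ^ S K * G)).
{ apply Rmult_le_compat_l; [lra|]. apply Rmult_le_compat_l; [apply Rmult_le_pos; lra|exact Gb]. }
assert (T2 := convex_tangent c (c' ps) ps a Hconv Hps Ha (Hder ps Hps)).
rewrite Hd in T2.
assert (E4 : Nr * (a * ps ^ S K * G) = a * (L * ps ^ S K)) by (unfold L; ring).
assert (E5 : Nr * (ps * ps ^ S K * G) = ps * (L * ps ^ S K)) by (unfold L; ring).
fold G. rewrite E5. lra.
Qed.

Lemma Gf_0 K M : Gf K M 0 0 = 0.
Proof. unfold Gf. rewrite Rmult_0_l, pow_i by lia. ring. Qed.

Lemma Gf_1 K M : Gf K M 1 1 = 0.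
Proof.
unfold Gf. replace (1 - 1 * 1 * (1 * 1) ^ K) with 0 by (rewrite !Rmult_1_l, pow1; ring).
rewrite (pow_i (S K)) by lia. ring.
Qed.


Require Import Defs.
From HB Require Import structures.
From mathcomp Require Import all_boot.
From Stdlib Require Import Reals Lra Lia.
From mathcomp Require Import zify.
Set Implicit Arguments.
Local Open Scope R_scope.

Lemma Rmult0l' : left_zero R0 Rmult. Proof. by move=> x; rewrite Rmult_0_l. Qed.
Lemma Rmult0r' : right_zero R0 Rmult. Proof. by move=> x; rewrite Rmult_0_r. Qed.
HB.instance Definition _ := Monoid.isMulLaw.Build R R0 Rmult Rmult0l' Rmult0r'.
Lemma RDl' : left_distributive Rmult Rplus. Proof. by move=> x y z; rewrite Rmult_plus_distr_r. Qed.
Lemma RDr' : right_distributive Rmult Rplus. Proof. by move=> x y z; rewrite Rmult_plus_distr_l. Qed.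
HB.instance Definition _ := Monoid.isAddLaw.Build R Rmult Rplus RDl' RDr'.

Lemma INR_sum (I : finType) (P : pred I) (F : I -> nat) :
  INR (\sum_(i | P i) F i)%N = \big[Rplus/R0]_(i | P i) INR (F i).
Proof. by apply: (big_morph INR plus_INR). Qed.

Lemma prod_const (I : finType) (P : pred I) (x : R) :
  \big[Rmult/R1]_(i | P i) x = x ^ #|P|.
Proof.
rewrite big_const; elim: #|P| => //= m ->; by [].
Qed.

Lemma sum_const (I : finType) (P : pred I) (x : R) :
  \big[Rplus/R0]_(i | P i) x = INR #|P| * x.
Proof.
rewrite big_const; elim: #|P| => [|m IH]; first by rewrite /= Rmult_0_l.
rewrite S_INR -[iter _ _ _]/(x + iter m (Rplus x) R0) IH; ring.
Qed.

Lemma ind_forall (I : finType) (P : pred I) :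
  (if [forall x, P x] then 1 else 0) = \big[Rmult/R1]_x (if P x then 1 else 0).
Proof.
case: forallP => [H|H].
  by rewrite big1 // => x _; rewrite H.
have [x Hx] : exists x, ~~ P x.
  apply/existsP; rewrite -negb_forall; apply/negP => /forallP; exact: H.
by rewrite (bigD1 x) //= (negbTE Hx) Rmult_0_l.
Qed.

Lemma bern_sum a : bern a true + bern a false = 1.
Proof. rewrite /=; ring. Qed.

Definition ind (b : bool) : R := if b then 1 else 0.

Section Comp.
Variable n : nat.
Notation I := ('I_n).

Definition wt (q : I -> R) (e : I * I) (b : bool) : R :=
  if e.1 == e.2 then bern 0 b else bern (q e.1 * q e.2) b.

Definition kn (L : {ffun I * I -> bool}) (j : I) (t : {set I}) : bool :=
  [forall m, (m \in t :\ j) ==> L (j, m)].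

Lemma knows_eq (w : outcome n) j (t : {set I}) :
  t \subset discovered w -> knows w j t = kn w.2 j t.
Proof.
move=> /subsetP Hd; rewrite /knows /kn.
apply/subsetP/forallP => [H m|H m mt].
  apply/implyP => /setD1P [mj mt]; move: (H m mt); rewrite !inE (negbTE mj) /=.
  by case/andP => /andP [].
rewrite !inE; case: eqP => //= /eqP mj.
move: (H m); rewrite !inE mj mt /= => ->; rewrite andbT.
by move: (Hd m mt); rewrite inE => ->.
Qed.

Lemma PT_eq k (w : outcome n) i (t : {set I}) :
  (t \in PT k w i) = [&& (#|t| == k)%N, i \in t, t \subset discovered w,
                        kn w.2 i t & [forall j, (j != i) ==> ~~ kn w.2 j t]].
Proof.
rewrite /PT inE /technology.
case: (boolP (t \subset discovered w)) => Hd; last by rewrite !andbF andbA andFb.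
rewrite (@knows_eq w i t Hd).
have -> : [forall j, (j != i) ==> ~~ knows w j t] = [forall j, (j != i) ==> ~~ kn w.2 j t].
  by apply: eq_forallb => j; rewrite (@knows_eq w j t Hd).
by rewrite andbT.
Qed.

Lemma sum_pair (T1 T2 : finType) (F : T1 * T2 -> R) :
  \big[Rplus/R0]_(w : T1 * T2) F w = \big[Rplus/R0]_x \big[Rplus/R0]_y F (x, y).
Proof. by rewrite pair_bigA; apply: eq_bigr => [[]]. Qed.

Lemma row_tot (q : I -> R) j :
  \big[Rplus/R0]_(g : {ffun I -> bool}) \big[Rmult/R1]_m wt q (j, m) (g m) = 1.
Proof.
rewrite -(bigA_distr_bigA (fun m b => wt q (j,m) b)).
rewrite big1 // => m _.
rewrite (bigD1 true) // (bigD1 false) // big_pred0 //=; last by case.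
rewrite /wt; case: (_ == _) => /=; ring.
Qed.

Lemma row_all (q : I -> R) j (S : {set I}) :
  j \notin S ->
  \big[Rplus/R0]_(g : {ffun I -> bool})
     (\big[Rmult/R1]_m wt q (j, m) (g m) * ind [forall m, (m \in S) ==> g m])
  = \big[Rmult/R1]_(m in S) (q j * q m).
Proof.
move=> jS.
rewrite (eq_bigr (fun g : {ffun I -> bool} =>
    \big[Rmult/R1]_m (wt q (j, m) (g m) * ind ((m \in S) ==> g m)))); last first.
  by move=> g _; rewrite /ind ind_forall big_split.
rewrite -(bigA_distr_bigA (fun m b => wt q (j,m) b * ind ((m \in S) ==> b))).
rewrite [RHS]big_mkcond; apply: eq_bigr => m _.
rewrite (bigD1 true) // (bigD1 false) // big_pred0 //=; last by case.
case: (boolP (m \in S)) => mS /=.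
  rewrite /wt /=; have -> : (j == m) = false by apply/eqP => E; move: jS; rewrite E mS.
  rewrite /=; ring.
rewrite /wt /ind; case: (_ == _) => /=; ring.
Qed.

End Comp.

Lemma aux1 x y : x * (1 - y) = x + -1 * (x * y). Proof. ring. Qed.

Lemma aux2 x : 1 + -1 * x = 1 - x. Proof. ring. Qed.

Section Comp2.
Variable n : nat.
Notation I := ('I_n).

Lemma D_sum (p : I -> R) (t : {set I}) :
  \big[Rplus/R0]_(d : {ffun I -> bool})
     (\big[Rmult/R1]_m bern (p m) (d m) * ind [forall m, (m \in t) ==> d m])
  = \big[Rmult/R1]_(m in t) p m.
Proof.
rewrite (eq_bigr (fun g : {ffun I -> bool} =>
    \big[Rmult/R1]_m (bern (p m) (g m) * ind ((m \in t) ==> g m)))); last first.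
  by move=> g _; rewrite /ind ind_forall big_split.
rewrite -(bigA_distr_bigA (fun m b => bern (p m) b * ind ((m \in t) ==> b))).
rewrite [RHS]big_mkcond; apply: eq_bigr => m _.
rewrite (bigD1 true) // (bigD1 false) // big_pred0 //=; last by case.
case: (m \in t); rewrite /ind /=; ring.
Qed.

Definition unc (G : {ffun I -> {ffun I -> bool}}) : {ffun I * I -> bool} :=
  [ffun e => G e.1 e.2].
Definition cur (L : {ffun I * I -> bool}) : {ffun I -> {ffun I -> bool}} :=
  [ffun j => [ffun m => L (j, m)]].

Lemma unc_bij : bijective unc.
Proof.
exists cur.
  by move=> G; apply/ffunP => j; apply/ffunP => m; rewrite !ffunE.
by move=> L; apply/ffunP => [[j m]]; rewrite !ffunE.
Qed.

Lemma L_sum (q : I -> R) (i : I) (t : {set I}) :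
  \big[Rplus/R0]_(L : {ffun I * I -> bool})
     (\big[Rmult/R1]_e wt q e (L e) *
      ind (kn L i t && [forall j, (j != i) ==> ~~ kn L j t]))
  = \big[Rmult/R1]_(m in t :\ i) (q i * q m) *
    \big[Rmult/R1]_(j | j != i) (1 - \big[Rmult/R1]_(m in t :\ j) (q j * q m)).
Proof.
rewrite (reindex unc); last by apply: onW_bij; exact: unc_bij.
pose X (G : {ffun I -> {ffun I -> bool}}) j := [forall m, (m \in t :\ j) ==> G j m].
pose f j (b : bool) := if j == i then ind b else 1 - ind b.
rewrite (eq_bigr (fun G : {ffun I -> {ffun I -> bool}} => \big[Rmult/R1]_j
     (\big[Rmult/R1]_m wt q (j, m) (G j m) * f j [forall m, (m \in t :\ j) ==> G j m])));
  last first.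
  move=> G _; rewrite big_split /=; congr Rmult.
    rewrite pair_bigA; apply: eq_bigr => [[j m]] _; by rewrite ffunE.
  have HX : forall j, kn (unc G) j t = X G j.
    by move=> j; apply: eq_forallb => m; rewrite ffunE.
  rewrite HX (bigD1 i) //= {1}/f eqxx.
  rewrite -/(X G i).
  have -> : [forall j, (j != i) ==> ~~ kn (unc G) j t] = [forall j, (j != i) ==> ~~ X G j].
    by apply: eq_forallb => j; rewrite HX.
  rewrite /ind; case: (X G i); last by rewrite !Rmult_0_l.
  rewrite andTb.
  rewrite (@ind_forall _ (fun j : I => (j != i) ==> ~~ X G j)) (bigD1 i) //= eqxx /= !Rmult_1_l.
  apply: eq_bigr => j ji; rewrite /f (negbTE ji) /= /ind.
  rewrite -/(X G j); case: (X G j) => /=; ring.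
rewrite -(bigA_distr_bigA (fun j (g : {ffun I -> bool}) =>
   \big[Rmult/R1]_m wt q (j, m) (g m) * f j [forall m, (m \in t :\ j) ==> g m])).
rewrite (bigD1 i) //=; congr Rmult.
  rewrite /f eqxx; apply: row_all; by rewrite !inE eqxx.
apply: eq_bigr => j ji; rewrite /f (negbTE ji).
rewrite (eq_bigr (fun g : {ffun I -> bool} => \big[Rmult/R1]_m wt q (j, m) (g m) +
    (-1) * (\big[Rmult/R1]_m wt q (j, m) (g m) * ind [forall m, (m \in t :\ j) ==> g m])));
  last by move=> g _; exact: aux1.
rewrite big_split /= row_tot -big_distrr /= row_all ?inE ?eqxx //; exact: aux2.
Qed.

End Comp2.

Lemma aux3 a b c d e : (a * b) * (c * d * e) = c * ((a * d) * (b * e)).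
Proof. ring. Qed.

Lemma ind_andb a b : ind (a && b) = ind a * ind b.
Proof. by case: a; case: b; rewrite /ind /=; ring. Qed.

Section Comp3.
Variable n : nat.
Notation I := ('I_n).

Definition tval (p q : I -> R) (i : I) (t : {set I}) : R :=
  \big[Rmult/R1]_(m in t) p m *
  (\big[Rmult/R1]_(m in t :\ i) (q i * q m) *
   \big[Rmult/R1]_(j | j != i) (1 - \big[Rmult/R1]_(m in t :\ j) (q j * q m))).

Lemma EPT_gen k (p q : I -> R) (i : I) :
  expected_PT k p q i =
  \big[Rplus/R0]_(t : {set I}) (ind ((#|t| == k)%N && (i \in t)) * tval p q i t).
Proof.
rewrite /expected_PT.
rewrite (eq_bigr (fun w : outcome n => \big[Rplus/R0]_(t : {set I})
      (outcome_prob p q w * ind (t \in PT k w i)))); last first.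
  move=> w _; rewrite -big_distrr /=; congr Rmult.
  rewrite -sum1_card big_mkcond INR_sum; apply: eq_bigr => t _.
  by rewrite /ind; case: (t \in PT k w i).
rewrite exchange_big /=; apply: eq_bigr => t _.
rewrite sum_pair.
rewrite (eq_bigr (fun d : {ffun I -> bool} => \big[Rplus/R0]_(L : {ffun I * I -> bool})
   (ind ((#|t| == k)%N && (i \in t)) *
     ((\big[Rmult/R1]_m bern (p m) (d m) * ind [forall m, (m \in t) ==> d m]) *
      (\big[Rmult/R1]_e wt q e (L e) *
        ind (kn L i t && [forall j, (j != i) ==> ~~ kn L j t])))))); last first.
  move=> d _; apply: eq_bigr => L _.
  rewrite PT_eq /outcome_prob /=.
  have -> : (t \subset discovered (d, L)) = [forall m, (m \in t) ==> d m].
    apply/subsetP/forallP => [H m|H m mt]; first by apply/implyP => /H; rewrite inE.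
    by move/implyP: (H m) => /(_ mt); rewrite inE.
  rewrite -aux3 -!ind_andb; congr (_ * _ * ind _).
  by case: (#|t| == k)%N; case: (i \in t); case: [forall m, _].
set B := \big[Rplus/R0]_(L : {ffun I * I -> bool}) (\big[Rmult/R1]_e wt q e (L e) *
        ind (kn L i t && [forall j, (j != i) ==> ~~ kn L j t])).
rewrite (eq_bigr (fun d : {ffun I -> bool} => ind ((#|t| == k)%N && (i \in t)) *
   ((\big[Rmult/R1]_m bern (p m) (d m) * ind [forall m, (m \in t) ==> d m]) * B))); last first.
  by move=> d _; rewrite /B big_distrr /= big_distrr.
rewrite -big_distrr /= -big_distrl /= D_sum /B L_sum //.
Qed.

End Comp3.

Section Comp4.
Variable n : nat.
Notation I := ('I_n).

Lemma prod_in_const (A : {set I}) (f : I -> R) x :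
  (forall m, m \in A -> f m = x) -> \big[Rmult/R1]_(m in A) f m = x ^ #|A|.
Proof. by move=> H; rewrite (eq_bigr (fun _ => x)) ?prod_const // => m /H. Qed.

Lemma prod_D1 (A : {set I}) (f : I -> R) a :
  a \in A -> \big[Rmult/R1]_(m in A) f m = f a * \big[Rmult/R1]_(m in A :\ a) f m.
Proof.
move=> aA; rewrite (bigD1 a) //=; congr Rmult; apply: eq_bigl => m.
by rewrite !inE andbC.
Qed.

Definition Hf (k : nat) (b qs : R) : R :=
  (b * qs) ^ (k - 1) * (1 - (qs * b) * (qs * qs) ^ (k - 2)) ^ (k - 1) *
  (1 - (qs * b) * (qs * qs) ^ (k - 1)) ^ (n - k).

Lemma tval_sym k (p q : I -> R) (i : I) ps qs (t : {set I}) :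
  (forall j, j != i -> p j = ps) -> (forall j, j != i -> q j = qs) ->
  #|t| = k -> i \in t ->
  tval p q i t = p i * ps ^ (k - 1) * Hf k (q i) qs.
Proof.
move=> Hp Hq tk it.
have ct : #|t :\ i| = (k - 1)%nat by move: (cardsD1 i t); rewrite it tk => ->; rewrite add1n subSS subn0.
rewrite /tval (prod_D1 _ it) (@prod_in_const (t :\ i) p ps); last first.
  by move=> m; rewrite !inE => /andP [mi _]; apply: Hp.
rewrite (@prod_in_const (t :\ i) (fun m => q i * q m) (q i * qs)); last first.
  by move=> m; rewrite !inE => /andP [mi _]; rewrite (Hq m mi).
set F := fun j => 1 - \big[Rmult/R1]_(m in t :\ j) (q j * q m).
have -> : \big[Rmult/R1]_(j | j != i) F j =
   \big[Rmult/R1]_(j in t :\ i) F j * \big[Rmult/R1]_(j in ~: t) F j.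
  rewrite (bigID (fun j => j \in t)) /=; congr Rmult; apply: eq_bigl => j; rewrite !inE.
    by rewrite andbC.
  case: (boolP (j \in t)) => jt /=; rewrite ?andbF ?andbT //.
  by apply/negP => /eqP E; move: jt; rewrite E it.
rewrite /F.
rewrite (@prod_in_const (t :\ i) (fun j => 1 - \big[Rmult/R1]_(m in t :\ j) (q j * q m)) (1 - (qs * q i) * (qs * qs) ^ (k - 2))); last first.
  move=> j; rewrite !inE => /andP [ji jt].
  have itj : i \in t :\ j by rewrite !inE eq_sym ji.
  rewrite (prod_D1 _ itj) (Hq j ji) (@prod_in_const _ (fun m => qs * q m) (qs * qs)); last first.
    move=> m; rewrite !inE => /andP [mi /andP [mj _]]; by rewrite (Hq m mi).
  congr (1 - _ * (_ ^ _)).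
  move: (cardsD1 j t) (cardsD1 i (t :\ j)); rewrite jt itj tk => -> ->.
  by rewrite !add1n subSS subSS !subn0.
rewrite (@prod_in_const (~: t) (fun j => 1 - \big[Rmult/R1]_(m in t :\ j) (q j * q m)) (1 - (qs * q i) * (qs * qs) ^ (k - 1))); last first.
  move=> j; rewrite inE => jt.
  have tj : t :\ j = t.
    apply/setP => m; rewrite !inE; case: (boolP (m == j)) => // /eqP ->.
    by rewrite (negbTE jt).
  have ji : j != i by apply/eqP => E; move: jt; rewrite E it.
  rewrite tj (prod_D1 _ it) (Hq j ji) (@prod_in_const _ (fun m => qs * q m) (qs * qs)) ?ct //.
  by move=> m; rewrite !inE => /andP [mi _]; rewrite (Hq m mi).
rewrite ct [#|~: t|]cardsCs setCK card_ord tk /Hf.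
rewrite -!Rmult_assoc; congr (_ * _ * _ * _).
Qed.

End Comp4.

Lemma bin_ge m : forall j, (0 < j)%nat -> (j < m)%nat -> (m <= 'C(m, j))%nat.
Proof.
elim: m => [|m IH] j j0 jm; first by [].
case: j j0 jm => [|j] // _ jm.
case: (ltnP j.+1 m) => h.
  rewrite binS -add1n addnC; apply: leq_add; first exact: IH.
  by rewrite bin_gt0 ltnW.
have E : j.+1 = m by apply/eqP; rewrite eqn_leq h andbT; exact: jm.
by rewrite -E binSn.
Qed.

Section Comp5.
Variable n : nat.
Notation I := ('I_n).

Definition Ncount (k : nat) (i : I) : nat := #|[set t : {set I} | (#|t| == k) && (i \in t)]|.

Lemma Ncount_eq k (i : I) : (1 <= k)%nat -> Ncount k i = 'C(n.-1, k.-1).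
Proof.
move=> k1; rewrite /Ncount.
have -> : [set t : {set I} | (#|t| == k) && (i \in t)] =
   (fun A => i |: A) @: [set A : {set I} | A \subset [set~ i] & #|A| == k.-1].
  apply/setP => t; rewrite inE; apply/idP/imsetP.
    case/andP => /eqP tk it; exists (t :\ i).
      rewrite inE; apply/andP; split; first by apply/subsetP => m; rewrite !inE => /andP [].
      by move: (cardsD1 i t); rewrite it tk add1n => ->.
    by rewrite setD1K.
  case=> A; rewrite inE => /andP [Ai /eqP Ak] ->.
  have iA : i \notin A by apply/negP => /(subsetP Ai); rewrite !inE eqxx.
  rewrite cardsU1 iA Ak setU11 andbT /=; by case: k k1 {Ak}.
rewrite card_in_imset; last first.
  move=> A B; rewrite !inE => /andP [Ai _] /andP [Bi _] E.
  have iA : i \notin A by apply/negP => /(subsetP Ai); rewrite !inE eqxx.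
  have iB : i \notin B by apply/negP => /(subsetP Bi); rewrite !inE eqxx.
  by rewrite -(setU1K iA) -(setU1K iB) E.
by rewrite cards_draws cardsC1 card_ord.
Qed.

Lemma EPT_sym k (p q : I -> R) (i : I) ps qs :
  (forall j, j != i -> p j = ps) -> (forall j, j != i -> q j = qs) ->
  expected_PT k p q i = INR (Ncount k i) * (p i * ps ^ (k - 1) * Hf n k (q i) qs).
Proof.
move=> Hp Hq; rewrite EPT_gen /Ncount -sum1_card INR_sum big_distrl /= [RHS]big_mkcond.
apply: eq_bigr => t _; rewrite inE.
case: (boolP ((#|t| == k) && (i \in t))) => [/andP [/eqP tk it]|_].
  by rewrite /ind Rmult_1_l (@tval_sym n k p q i ps qs t Hp Hq tk it) /= Rmult_1_l.
by rewrite /ind Rmult_0_l.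
Qed.

End Comp5.

Lemma Hf_Gf K M b qs : Hf (K.+2 + M.+1) K.+2 b qs = Gf K M qs b.
Proof.
rewrite /Hf /Gf.
have -> : (K.+2 + M.+1 - K.+2)%nat = M.+1 by rewrite addKn.
by rewrite !subSS !subn0.
Qed.

Lemma payoff_dev K M c ps qs (i : 'I_(K.+2 + M.+1)) a b :
  payoff K.+2 c (upd (fun _ => ps) i a) (upd (fun _ => qs) i b) i =
  INR (Ncount K.+2 i) * (a * ps ^ S K * Gf K M qs b) - c a.
Proof.
rewrite /payoff (@EPT_sym _ K.+2 _ _ i ps qs).
- by rewrite /upd eqxx Hf_Gf.
- by move=> j ji; rewrite /upd (negbTE ji).
- by move=> j ji; rewrite /upd (negbTE ji).
Qed.

Lemma payoff_sym K M c ps qs (i : 'I_(K.+2 + M.+1)) :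
  payoff K.+2 c (fun _ => ps) (fun _ => qs) i =
  INR (Ncount K.+2 i) * (ps * ps ^ S K * Gf K M qs qs) - c ps.
Proof.
by rewrite /payoff (@EPT_sym _ K.+2 _ _ i ps qs) // Hf_Gf.
Qed.

Lemma Ncount_ge K M (i : 'I_(K.+2 + M.+1)) :
  Ncount K.+2 i = 'C(K.+2 + M, K.+1) /\ (M.+1 <= Ncount K.+2 i)%coq_nat.
Proof.
rewrite Ncount_eq // addnS /=; split => //.
apply/leP.
have h : leq K.+2 (K.+2 + M) by rewrite leq_addr.
apply: leq_trans (@bin_ge (K.+2 + M) K.+1 isT h).
by rewrite -add1n leq_add2r.
Qed.

Lemma eq_facts K M c ps qs :
  cost_ok c -> sym_invest_eq (K.+2 + M.+1) K.+2 c ps qs ->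
  0 < qs < 1 /\ (forall b, 0 <= b <= 1 -> Gf K M qs b <= Gf K M qs qs).
Proof.
move=> [c0 [Hnn [Hinc _]]] [[Hadm Heq] Hps].
have i : 'I_(K.+2 + M.+1) by exists 0%nat; rewrite addnS.
have [Hp1 Hq1] := Hadm i.
have [_ HN] := Ncount_ge i.
have HNp : 0 < INR (Ncount K.+2 i).
  apply: lt_0_INR. move: HN => /leP HN'. apply/ltP. by apply: leq_trans HN'.
set Nn := INR (Ncount K.+2 i) in HNp *.
have Hpk : 0 < ps * ps ^ S K by apply: Rmult_lt_0_compat => //; apply: pow_lt.
have Hcps : 0 < c ps by rewrite -c0; apply: Hinc; lra.
have H00 := Heq i 0 0 (conj (conj (Rle_refl 0) Rlt_0_1) (conj (Rle_refl 0) Rle_0_1)).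
rewrite payoff_dev payoff_sym c0 -/Nn in H00.
have HG : 0 < Gf K M qs qs.
  case: (Rle_or_lt (Gf K M qs qs) 0) => // h; exfalso.
  have : Nn * (ps * ps ^ S K * Gf K M qs qs) <= 0.
    rewrite -(Rmult_0_r Nn); apply: Rmult_le_compat_l; first lra.
    rewrite -(Rmult_0_r (ps * ps ^ S K)); apply: Rmult_le_compat_l; lra.
  move=> h2. have : Nn * (0 * ps ^ S K * Gf K M qs 0) = 0 by ring.
  move=> h3; lra.
split.
  split.
    case: (Rle_lt_or_eq_dec 0 qs (proj1 Hq1)) => // E.
    by move: HG; rewrite -E Gf_0; lra.
  case: (Rle_lt_or_eq_dec qs 1 (proj2 Hq1)) => // E.
  by move: HG; rewrite E Gf_1; lra.
move=> b Hb.
have Hd := Heq i ps b (conj Hp1 Hb).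
rewrite payoff_dev payoff_sym -/Nn in Hd.
have H1 : Nn * (ps * ps ^ S K) * Gf K M qs b <= Nn * (ps * ps ^ S K) * Gf K M qs qs.
  have E1 : Nn * (ps * ps ^ S K) * Gf K M qs b = Nn * (ps * ps ^ S K * Gf K M qs b) by ring.
  have E2 : Nn * (ps * ps ^ S K) * Gf K M qs qs = Nn * (ps * ps ^ S K * Gf K M qs qs) by ring.
  rewrite E1 E2; lra.
apply: (Rmult_le_reg_l (Nn * (ps * ps ^ S K))) => //.
exact: Rmult_lt_0_compat.
Qed.

Theorem propositionC1 (k : nat) (c : R -> R) :
  (2 <= k)%coq_nat -> cost_ok c ->
  (exists N : nat, forall n : nat, (N <= n)%coq_nat ->
     exists ps qs : R, sym_invest_eq n k c ps qs) /\
  (forall ps qs : nat -> R,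
     (exists N : nat, forall n : nat, (N <= n)%coq_nat -> sym_invest_eq n k c (ps n) (qs n)) ->
     Un_cv (fun n : nat => (iota_rate (qs n) (qs n) * Rpower (INR n) (1 / INR k))%R)
           (Rpower (INR k - 1) (1 / INR k))).
Proof.
move=> Hk Hc.
have [K EK] : exists K, k = K.+2 by exists (k - 2)%coq_nat; lia.
subst k.
have Hc' := Hc.
case: Hc' => [c0 [Hnn [Hinc [Hconv [[c' [Hder _]] Hinf]]]]].
split.
- have [M0 HM0] := exist_pure K c c' Hder Hnn Hinf Hconv.
  exists (K + 3 + M0)%coq_nat => n Hn.
  have En : n = (K.+2 + (n - (K + 3)).+1)%coq_nat by lia.
  set M := (n - (K + 3))%coq_nat in En.
  have HMM : (M0 <= M)%coq_nat by rewrite /M; lia.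
  rewrite En.
  have HNr : (M.+1 <= 'C(K.+2 + M, K.+1))%coq_nat.
    have i : 'I_(K.+2 + M.+1) by exists 0%nat; rewrite addnS.
    by have [<- ?] := Ncount_ge i.
  have [ps [qs [Hps [Hqs Hineq]]]] := HM0 M HMM _ (le_INR _ _ HNr).
  exists ps, qs; split; last by lra.
  split; first by move=> i; split; lra.
  move=> i a b [Ha Hb].
  rewrite payoff_dev payoff_sym.
  have [-> _] := Ncount_ge i.
  exact: Hineq.
- move=> ps qs [N HN].
  rewrite /iota_rate.
  apply: (lim_part K (fun n => qs n * qs n) (N + K + 3)%coq_nat); first lia.
  move=> n Hn.
  have En : n = (K.+2 + (n - (K + 3)).+1)%coq_nat by lia.
  have Heq := HN n ltac:(lia).
  rewrite {1}En in Heq.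
  have [Hq Hmax] := eq_facts Hc Heq.
  split; first by split; nra.
  exact: foc_from_max.
Qed.
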